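(* There is an absolute constant $K$ such that for every integer $c \ge 0$ there is a deterministic finite automaton over the alphabet $\{0,1\}\times\{0,1\}$, reading its input most significant digit first, with at most $K\max(1,\log c)$ states (not counting a dead state), which accepts a word $x \times y$ (with $x,y$ valid Fibonacci representations of the same length) if and only if $[x] - c = [y]$.
   Context: Fibonacci numbers: $F_0=0$, $F_1=1$, $F_k=F_{k-1}+F_{k-2}$. For a binary word $x = x_1\cdots x_\ell$, $[x] = \sum_{j=1}^{\ell} x_j F_{\ell-j+2}$. A valid Fibonacci representation is a binary word with no factor $11$; leading zeros are allowed. For words $x,y$ of equal length, $x\times y$ denotes the word over $\{0,1\}^2$ whose first component is $x$ and second is $y$ (shorter representation padded with leading zeros). A dead state is not counted. *)

(* Defs.v *)
From Stdlib Require Import Reals List Arith ZArith.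
Import ListNotations.

Fixpoint fib (k : nat) : nat :=
  match k with
  | 0 => 0
  | S k' => match k' with
            | 0 => 1
            | S k'' => fib k' + fib k''
            end
  end.

Fixpoint fibval (x : list bool) : nat :=
  match x with
  | [] => 0
  | b :: x' => (if b then fib (length x' + 2) else 0) + fibval x'
  end.

(* valid Fibonacci representation: no factor 11 (leading zeros allowed) *)
Fixpoint valid_fib (x : list bool) : Prop :=
  match x with
  | true :: ((true :: _) as _) => False
  | _ :: x' => valid_fib x'
  | [] => True
  end.

(* A deterministic finite automaton over {0,1} x {0,1} with states 0..n-1
   and a partial transition function: an undefined transition (None) means
   going to the (implicit, uncounted) dead state. *)
Record DFA := mkDFA {
  nstates : nat;
  start : nat;
  delta : nat -> bool * bool -> option nat;
  accepting : nat -> bool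
}.

Definition wf_DFA (A : DFA) : Prop :=
  start A < nstates A /\
  forall q a q', q < nstates A -> delta A q a = Some q' -> q' < nstates A.

Fixpoint run (A : DFA) (q : nat) (w : list (bool * bool)) : option nat :=
  match w with
  | [] => Some q
  | a :: w' => match delta A q a with
               | Some q' => run A q' w'
               | None => None
               end
  end.

Definition accepts (A : DFA) (w : list (bool * bool)) : bool :=
  match run A (start A) w with
  | Some q => accepting A q
  | None => false
  end.

(* Main.v *)
Require Import Defs.
From Stdlib Require Import Reals List Arith ZArith Lra Lia.
Import ListNotations.
Open Scope R_scope.

Definition phi : R := (1 + sqrt 5) / 2.

Lemma phi_facts : 1.6 <= phi <= 1.62 /\ phi * phi = phi + 1.
Proof.
  assert (H5 : sqrt 5 * sqrt 5 = 5) by (apply sqrt_sqrt; lra).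
  assert (H0 : 0 <= sqrt 5) by apply sqrt_pos.
  unfold phi. split; [split|]; nra.
Qed.

Definition fl (q : Z) : Z := Int_part (phi * IZR q).
Definition irange : list Z := [(-2)%Z; (-1)%Z; 0%Z; 1%Z; 2%Z; 3%Z].
Definition jrange : list Z := [(-3)%Z; (-2)%Z; (-1)%Z; 0%Z; 1%Z; 2%Z; 3%Z].
Definition window (z : Z) : list (Z * Z) :=
  flat_map (fun i => map (fun j => (fl (z + i) + j, z + i)%Z) jrange) irange.
Definition G (m : nat) : R := phi * INR (fib (S (S m))) + INR (fib (S m)).
Definition Mb (c : nat) : nat := 2 * (Nat.log2 c + 1).
Definition L (c : nat) : list (Z * Z) :=
  flat_map (fun m => window (Int_part (INR c / G m))) (seq 0 (Mb c)) ++ window 0%Z.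

Lemma window_len z : length (window z) = 42%nat.
Proof. reflexivity. Qed.

Lemma flat_map_len {A B} (f : A -> list B) k l :
  (forall a, length (f a) = k) -> length (flat_map f l) = (length l * k)%nat.
Proof.
  intros H; induction l; simpl; auto. rewrite length_app, H, IHl. reflexivity.
Qed.

Lemma L_len c : length (L c) = ((Mb c + 1) * 42)%nat.
Proof.
  unfold L. rewrite length_app, (flat_map_len _ 42%nat), length_seq, window_len
    by (intros; apply window_len). lia.
Qed.

Lemma window_in z x P Q :
  IZR z <= x -> x - 1 < IZR z -> IZR Q - x < 5/2 -> -(5/2) < IZR Q - x ->
  -3 <= IZR P - phi * IZR Q <= 3 -> In (P, Q) (window z).
Proof.
  intros H1 H2 H3 H4 [H5 H6].
  destruct (base_Int_part (phi * IZR Q)) as [B1 B2].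
  fold (fl Q) in B1, B2.
  assert (A1 : (-3 < Q - z)%Z) by (apply lt_IZR; rewrite minus_IZR; simpl; lra).
  assert (A2 : (Q - z < 4)%Z) by (apply lt_IZR; rewrite minus_IZR; simpl; lra).
  assert (A3 : (-4 < P - fl Q)%Z) by (apply lt_IZR; rewrite minus_IZR; simpl; lra).
  assert (A4 : (P - fl Q < 4)%Z) by (apply lt_IZR; rewrite minus_IZR; simpl; lra).
  unfold window. apply in_flat_map. exists (Q - z)%Z. split.
  - unfold irange. assert (Q - z = -2 \/ Q - z = -1 \/ Q - z = 0 \/ Q - z = 1 \/ Q - z = 2 \/ Q - z = 3)%Z
      as HH by lia. simpl. intuition.
  - apply in_map_iff. exists (P - fl Q)%Z.
    replace (z + (Q - z))%Z with Q by ring. split.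
    + f_equal; ring.
    + unfold jrange. assert (P - fl Q = -3 \/ P - fl Q = -2 \/ P - fl Q = -1 \/ P - fl Q = 0 \/
        P - fl Q = 1 \/ P - fl Q = 2 \/ P - fl Q = 3)%Z as HH by lia. simpl. intuition.
Qed.

Lemma fibSS n : fib (S (S n)) = (fib (S n) + fib n)%nat.
Proof. reflexivity. Qed.

Lemma fib_S n : (fib n <= fib (S n))%nat.
Proof. destruct n; [simpl; lia|]. rewrite fibSS. lia. Qed.

Lemma fib_mono n m : (n <= m)%nat -> (fib n <= fib m)%nat.
Proof. induction 1; auto. pose proof (fib_S m). lia. Qed.

Lemma fib_pos n : (1 <= fib (S n))%nat.
Proof. induction n; [simpl; auto|]. rewrite fibSS. lia. Qed.

Lemma fib_pow k : (2 ^ k <= fib (2 * k + 2))%nat.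
Proof.
  induction k; [simpl; auto|].
  replace (2 * S k + 2)%nat with (S (S (2 * k + 2))) by lia.
  rewrite fibSS. pose proof (fib_S (2*k+2)). rewrite Nat.pow_succ_r'. lia.
Qed.

Lemma c_lt_fib c m : (Mb c <= m)%nat -> (c < fib (S (S m)))%nat.
Proof.
  intros H. unfold Mb in H.
  pose proof (fib_pow (Nat.log2 c + 1)).
  pose proof (fib_mono (2 * (Nat.log2 c + 1) + 2) (S (S m))) as Hm.
  destruct c. { pose proof (fib_pos (S m)). lia. }
  pose proof (Nat.log2_spec (S c)) as [_ Hs]; [lia|].
  rewrite Nat.add_1_r in *. lia.
Qed.

Lemma key c m P Q :
  -3 <= IZR P - phi * IZR Q <= 3 ->
  (- Z.of_nat (fib (S (S m))) < P * Z.of_nat (fib (S (S m))) + Q * Z.of_nat (fib (S m)) - Z.of_nat c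
     < Z.of_nat (fib (S (S m))))%Z ->
  In (P, Q) (L c).
Proof.
  intros He [Hz1 Hz2].
  apply IZR_lt in Hz1. apply IZR_lt in Hz2.
  rewrite ?minus_IZR, ?plus_IZR, ?mult_IZR, ?opp_IZR in Hz1, Hz2.
  rewrite opp_IZR in Hz1. rewrite <- !INR_IZR_INZ in Hz1, Hz2.
  set (u := INR (fib (S (S m)))) in *. set (v := INR (fib (S m))) in *.
  assert (Hu : 1 <= u) by (unfold u; apply (le_INR 1); apply fib_pos).
  assert (Hv : 0 <= v) by apply pos_INR.
  destruct phi_facts as [[Hp1 Hp2] Hpp].
  assert (HG : G m = phi * u + v) by reflexivity.
  assert (HGp : 0 < G m) by nra.
  set (x := INR c / G m).
  assert (Hx : x * G m = INR c) by (unfold x; field; lra).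
  assert (Hx0 : 0 <= x) by (unfold x; apply Rmult_le_pos; [apply pos_INR|left; apply Rinv_0_lt_compat; lra]).
  destruct He as [He1 He2].
  assert (K1 : (IZR P - phi * IZR Q) * u <= 3 * u) by nra.
  assert (K2 : -3 * u <= (IZR P - phi * IZR Q) * u) by nra.
  assert (Hpu : 1.6 * u <= phi * u) by nra.
  assert (E1 : IZR Q * G m - INR c < 5/2 * G m) by (rewrite HG; lra).
  assert (E2 : -(5/2) * G m < IZR Q * G m - INR c) by (rewrite HG; lra).
  assert (F1' : (IZR Q - x - 5/2) * G m < 0) by lra.
  assert (F2' : 0 < (IZR Q - x + 5/2) * G m) by lra.
  assert (F1 : IZR Q - x < 5/2) by (clear - F1' HGp; nra).
  assert (F2 : -(5/2) < IZR Q - x) by (clear - F2' HGp; nra).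
  unfold L. apply in_or_app.
  destruct (Nat.lt_ge_cases m (Mb c)) as [Hm|Hm].
  - left. apply in_flat_map. exists m. split.
    + apply in_seq. lia.
    + destruct (base_Int_part x) as [B1 B2].
      apply (window_in _ x); try split; auto; unfold x in *; lra.
  - right. pose proof (c_lt_fib c m Hm) as Hc. apply lt_INR in Hc. fold u in Hc.
    assert (x < 1) by nra.
    apply (window_in _ x); simpl; try split; auto; lra.
Qed.

Definition b2z (b : bool) : Z := if b then 1%Z else 0%Z.
Definition step (s : Z * Z) (ab : bool * bool) : Z * Z :=
  (fst s + snd s + b2z (fst ab) - b2z (snd ab), fst s)%Z.
Fixpoint traj (s : Z * Z) (w : list (bool * bool)) : Z * Z :=
  match w with [] => s | a :: w' => traj (step s a) w' end.

Fixpoint idx (p : Z * Z) (l : list (Z * Z)) : nat :=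
  match l with
  | [] => 0
  | h :: t => if (Z.eqb (fst h) (fst p) && Z.eqb (snd h) (snd p))%bool then 0 else S (idx p t)
  end.

Lemma idx_nth p l : (idx p l < length l)%nat -> nth (idx p l) l (0%Z, 0%Z) = p.
Proof.
  induction l as [|h t IH]; simpl; [lia|].
  destruct (Z.eqb (fst h) (fst p) && Z.eqb (snd h) (snd p))%bool eqn:E.
  - apply andb_prop in E as [E1 E2]. apply Z.eqb_eq in E1, E2.
    destruct h, p; simpl in *; subst; auto.
  - intros; apply IH; lia.
Qed.

Lemma In_idx p l : In p l -> (idx p l < length l)%nat.
Proof.
  induction l as [|h t IH]; simpl; [tauto|].
  intros [<-|H].
  - rewrite !Z.eqb_refl. simpl. lia.
  - destruct (_ && _)%bool; [lia|]. specialize (IH H). lia.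
Qed.

Definition mkA (c : nat) : DFA :=
  mkDFA (length (L c)) (idx (0%Z, 0%Z) (L c))
    (fun q a => let s' := step (nth q (L c) (0%Z, 0%Z)) a in
                if (idx s' (L c) <? length (L c))%nat then Some (idx s' (L c)) else None)
    (fun q => let s := nth q (L c) (0%Z, 0%Z) in Z.eqb (fst s + snd s) (Z.of_nat c)).

Lemma run_traj c w : forall q q', run (mkA c) q w = Some q' ->
  nth q' (L c) (0%Z, 0%Z) = traj (nth q (L c) (0%Z, 0%Z)) w.
Proof.
  induction w as [|a w IH]; simpl; intros q q' H.
  - injection H; intros; subst; auto.
  - destruct (idx (step (nth q (L c) (0%Z, 0%Z)) a) (L c) <? length (L c))%nat eqn:E;
      [|discriminate].
    apply IH in H. rewrite H. apply Nat.ltb_lt in E. rewrite idx_nth; auto.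
Qed.

Fixpoint okp (l : list (Z * Z)) (s : Z * Z) (w : list (bool * bool)) : Prop :=
  match w with [] => True | a :: w' => In (step s a) l /\ okp l (step s a) w' end.

Lemma run_ok c w : forall q, okp (L c) (nth q (L c) (0%Z, 0%Z)) w ->
  exists q', run (mkA c) q w = Some q'.
Proof.
  induction w as [|a w IH]; simpl; intros q H; eauto.
  destruct H as [H1 H2]. pose proof (In_idx _ _ H1) as Hl.
  apply Nat.ltb_lt in Hl as Hb. rewrite Hb. apply IH. rewrite idx_nth; auto.
Qed.

Lemma add2 n : (n + 2 = S (S n))%nat.
Proof. lia. Qed.

Lemma traj_val x : forall y s, length x = length y ->
  (fst (traj s (combine x y)) + snd (traj s (combine x y)) =
   fst s * Z.of_nat (fib (S (S (length x)))) + snd s * Z.of_nat (fib (S (length x)))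
   + Z.of_nat (fibval x) - Z.of_nat (fibval y))%Z.
Proof.
  induction x as [|a x IH]; intros [|b y] s Hl; cbn [length combine traj fibval] in *; try discriminate.
  - cbn [fib]. lia.
  - injection Hl as Hl. rewrite IH by auto. rewrite !add2, <- Hl.
    unfold step, b2z; cbn [fst snd].
    rewrite (fibSS (S (length x))).
    pose proof (fibSS (length x)).
    destruct a, b; lia.
Qed.

Lemma valid_tail a x : valid_fib (a :: x) -> valid_fib x.
Proof. destruct a, x as [|[] x]; simpl; tauto. Qed.

Lemma valid_bound n : forall x, (length x <= n)%nat -> valid_fib x ->
  (fibval x + 1 <= fib (S (S (length x))))%nat.
Proof.
  induction n as [|n IH]; intros x Hl Hv.
  - destruct x; cbn [length] in *; [cbn; lia|lia].
  - destruct x as [|[] x].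
    + cbn; lia.
    + destruct x as [|[] x].
      * cbn; lia.
      * simpl in Hv; tauto.
      * simpl in Hv. cbn [length] in Hl.
        specialize (IH x ltac:(lia) Hv).
        cbn [fibval length]. rewrite !add2.
        rewrite (fibSS (S (S (length x)))), (fibSS (S (length x))). lia.
    + cbn [length] in Hl. specialize (IH x ltac:(lia) (valid_tail _ _ Hv)).
      cbn [fibval length]. rewrite (fibSS (S (length x))). lia.
Qed.

Definition inv (s : Z * Z) : Prop := -3 <= IZR (fst s) - phi * IZR (snd s) <= 3.

Lemma inv_step s a : inv s -> inv (step s a).
Proof.
  unfold inv, step. simpl. intros [H1 H2].
  destruct phi_facts as [[Hp1 Hp2] Hpp].
  rewrite !minus_IZR, !plus_IZR.
  assert (Hd : -1 <= IZR (b2z (fst a)) - IZR (b2z (snd a)) <= 1)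
    by (destruct a as [[] []]; simpl; lra).
  assert (Eq : IZR (fst s) + IZR (snd s) - phi * IZR (fst s) =
     -(phi - 1) * (IZR (fst s) - phi * IZR (snd s))).
  { replace (-(phi - 1) * (IZR (fst s) - phi * IZR (snd s))) with
     (-(phi - 1) * IZR (fst s) + phi * phi * IZR (snd s) - phi * IZR (snd s)) by ring.
    rewrite Hpp. ring. }
  split; nra.
Qed.

Lemma live c x : forall y s, length x = length y -> valid_fib x -> valid_fib y -> inv s ->
  (fst (traj s (combine x y)) + snd (traj s (combine x y)) = Z.of_nat c)%Z ->
  okp (L c) s (combine x y).
Proof.
  induction x as [|a x IH]; intros [|b y] s Hl Hx Hy Hi He; cbn [combine traj length okp] in *; try discriminate; auto.
  injection Hl as Hl.
  assert (Hi' := inv_step s (a, b) Hi).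
  split.
  - destruct (step s (a, b)) as [P Q] eqn:Es.
    rewrite traj_val in He by auto.
    pose proof (valid_bound _ x (le_n _) (valid_tail _ _ Hx)) as Bx.
    pose proof (valid_bound _ y (le_n _) (valid_tail _ _ Hy)) as By.
    rewrite <- Hl in By.
    apply (key c (length x)); [exact Hi'|].
    remember (P * Z.of_nat (fib (S (S (length x)))))%Z as T1.
    remember (Q * Z.of_nat (fib (S (length x))))%Z as T2.
    cbn [fst snd] in He. lia.
  - apply IH; auto; eapply valid_tail; eauto.
Qed.

Lemma size_bound c : INR ((Mb c + 1) * 42) <= 1000 * Rmax 1 (ln (INR c)).
Proof.
  unfold Mb. destruct (Nat.lt_ge_cases c 2) as [Hc|Hc].
  - assert (Nat.log2 c = 0)%nat by (destruct c as [|[|]]; [reflexivity|reflexivity|lia]).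
    rewrite H. replace (INR ((2 * (0 + 1) + 1) * 42)) with 126 by (simpl; ring).
    pose proof (Rmax_l 1 (ln (INR c))). lra.
  - set (l := Nat.log2 c).
    pose proof (Nat.log2_spec c ltac:(lia)) as [Hs _]. fold l in Hs.
    assert (Hl1 : (1 <= l)%nat) by (pose proof (Nat.log2_le_mono 2 c Hc) as HH; change (Nat.log2 2) with 1%nat in HH; exact HH).
    apply le_INR in Hs. rewrite pow_INR in Hs. replace (INR 2) with 2 in Hs by (simpl; ring).
    assert (Hln : INR l * ln 2 <= ln (INR c)).
    { rewrite <- ln_pow by lra. destruct (Rle_lt_or_eq_dec _ _ Hs) as [Hlt|Heq].
      - left. apply ln_increasing; auto. apply pow_lt; lra.
      - rewrite Heq; lra. }
    pose proof ln_lt_2. apply le_INR in Hl1. simpl in Hl1.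
    pose proof (Rmax_r 1 (ln (INR c))).
    rewrite mult_INR, plus_INR, mult_INR, plus_INR. simpl.
    nra.
Qed.

Theorem theorem6 :
  exists K : R, forall c : nat,
    exists A : DFA,
      wf_DFA A /\
      (INR (nstates A) <= K * Rmax 1 (ln (INR c)))%R /\
      forall x y : list bool,
        length x = length y -> valid_fib x -> valid_fib y ->
        (accepts A (combine x y) = true <->
         (Z.of_nat (fibval x) - Z.of_nat c = Z.of_nat (fibval y))%Z).
Proof.
  exists 1000. intros c. exists (mkA c).
  assert (H0 : In (0%Z, 0%Z) (L c)).
  { unfold L. apply in_or_app. right. apply (window_in _ 0); simpl; try split; try lra.
  }
  pose proof (In_idx _ _ H0) as Hs.
  assert (Hs' := idx_nth _ _ Hs).
  split; [|split].
  - split; [exact Hs|]. simpl. intros q a q' _ Hd.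
    destruct (_ <? _)%nat eqn:E; [|discriminate]. injection Hd as <-.
    apply Nat.ltb_lt in E; exact E.
  - simpl. rewrite L_len. apply size_bound.
  - intros x y Hl Hx Hy.
    pose proof (traj_val x y (0%Z, 0%Z) Hl) as Tv. simpl in Tv.
    unfold accepts. split.
    + destruct (run (mkA c) (start (mkA c)) (combine x y)) as [q'|] eqn:R; [|discriminate].
      apply run_traj in R. simpl in R. rewrite Hs' in R.
      simpl. rewrite R. intros Ha. apply Z.eqb_eq in Ha. lia.
    + intros He.
      assert (Hok : okp (L c) (0%Z, 0%Z) (combine x y)).
      { apply live; auto. unfold inv; simpl; lra. lia. }
      rewrite <- Hs' in Hok. destruct (run_ok c _ _ Hok) as [q' R].
      simpl in R |- *. rewrite R.
      apply run_traj in R. rewrite Hs' in R. rewrite R. apply Z.eqb_eq. lia.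
Qed.
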